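(* Let $n\ge 3$ be an integer and let $c>0$ be a real constant satisfying \[ 2c + \frac{2}{3}c^2 - \frac{2c}{3(n-2)} > 1 . \] Put $d = \lceil \sqrt{c(n-2)}\,\rceil$. Then there exists a real polynomial on $\mathbb{R}^n$ of degree $d$ if $d$ is even, and of degree $d+1$ if $d$ is odd, which is a $\tfrac13$-approximation of $NAE_n$.
   Context: $NAE_n:\{0,1\}^n\to\{0,1\}$ is the function that equals $1$ iff $x\in\{0^n,1^n\}$, i.e. all bits of the input are the same. A real polynomial $q$ on $\mathbb{R}^n$ is a $\tfrac13$-approximation of $g:\{0,1\}^n\to\{0,1\}$ if $|g(x)-q(x)|\le \tfrac13$ for every $x\in\{0,1\}^n$. *)

(* Defs.v *)
From HB Require Import structures.
From mathcomp Require Import all_boot all_order all_algebra.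
From mathcomp Require Import reals.
From mathcomp Require Import mpoly.
Set Implicit Arguments. Unset Strict Implicit. Unset Printing Implicit Defensive.
Import Order.TTheory GRing.Theory Num.Theory.
Local Open Scope ring_scope.

Definition NAE (n : nat) (x : 'I_n -> bool) : nat :=
  if [forall i, forall j, x i == x j] then 1%N else 0%N.

Definition bitpt (R : nzRingType) (n : nat) (x : 'I_n -> bool) : 'I_n -> R :=
  fun i => (x i)%:R.

Definition approx13 (R : realType) (n : nat) (g : ('I_n -> bool) -> nat)
  (q : {mpoly R[n]}) : Prop :=
  forall x : 'I_n -> bool, `|(g x)%:R - q.@[bitpt R x]| <= 3^-1.

(* total degree of a nonzero multivariate polynomial is (msize q).-1 *)
Definition mdegree (R : realType) (n : nat) (q : {mpoly R[n]}) : nat :=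
  (msize q).-1.

(* Main.v *)
Require Import Defs.
From HB Require Import structures.
From mathcomp Require Import all_boot all_order all_algebra.
From mathcomp Require Import reals.
From mathcomp Require Import mpoly.
From mathcomp Require Import ring lra.
Import Order.TTheory GRing.Theory Num.Theory.
Set Implicit Arguments. Unset Strict Implicit.
Local Open Scope ring_scope.

Fixpoint chebp (A : nzRingType) (y : A) (k : nat) : A * A :=
  match k with
  | 0%N => (1, y)
  | k'.+1 => let p := @chebp A y k' in (p.2, (y * p.2) *+ 2 - p.1)
  end.

Section Real.
Variable R : realType.

Lemma cheb_inv (y : R) k :
  (chebp y k).1 ^+ 2 + (chebp y k).2 ^+ 2 - 2 * y * (chebp y k).1 * (chebp y k).2
  = 1 - y ^+ 2.
Proof.
elim: k => [|k IH] /=; first by ring.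
rewrite -IH. rewrite mulr2n. ring.
Qed.

Lemma cheb_bound (y : R) k : y ^+ 2 <= 1 -> (chebp y k).1 ^+ 2 <= 1.
Proof.
move=> hy; elim: k => [|k IH] /=; first by rewrite expr1n.
have := cheb_inv y k.
set a := (chebp y k).1; set b := (chebp y k).2 => E.
have [hlt|hge] := ltP (y ^+ 2) 1.
  have E2 : (a - y * b) ^+ 2 = (1 - y ^+ 2) * (1 - b ^+ 2).
    apply/eqP; rewrite -subr_eq0.
    have -> : (a - y * b) ^+ 2 - (1 - y ^+ 2) * (1 - b ^+ 2) =
      (a ^+ 2 + b ^+ 2 - 2 * y * a * b) - (1 - y ^+ 2) by ring.
    by rewrite E subrr.
  have : 0 <= (1 - y ^+ 2) * (1 - b ^+ 2) by rewrite -E2 sqr_ge0.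
  rewrite pmulr_rge0 ?subr_gt0 // subr_ge0 //.
have y1 : y ^+ 2 = 1 by apply/le_anti; rewrite hy hge.
have E2 : (b - y * a) ^+ 2 = 0.
  have -> : (b - y * a) ^+ 2 = (a ^+ 2 + b ^+ 2 - 2 * y * a * b) - a ^+ 2 * (1 - y ^+ 2) by ring.
  by rewrite E y1 subrr mulr0 subr0.
move/eqP: E2; rewrite sqrf_eq0 subr_eq0 => /eqP ->.
by rewrite exprMn y1 mul1r.
Qed.

Definition Pl (dl x : R) := 1 + x ^+ 2 * dl + x ^+ 2 * (x ^+ 2 - 1) * dl ^+ 2 / 6.

Lemma cheb_lower (dl : R) k : 0 <= dl ->
  0 <= (chebp (1 + dl) k).1 - Pl dl k%:R <=
    (chebp (1 + dl) k).2 - Pl dl k.+1%:R.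
Proof.
move=> hd; elim: k => [|k IH] /=.
  have -> : Pl dl 0%:R = 1 by rewrite /Pl; ring.
  have -> : Pl dl 1%:R = 1 + dl by rewrite /Pl; ring.
  by rewrite !subrr lexx.
set a := (chebp (1 + dl) k).1; set b := (chebp (1 + dl) k).2.
move: IH; rewrite -/a -/b => /andP [h1 h2].
apply/andP; split; first exact: le_trans h2.
have x0 : 0 <= k%:R :> R by [].
have hr : Pl dl k.+2%:R = (1 + dl) * Pl dl k.+1%:R *+ 2 - Pl dl k%:R
   - dl ^+ 3 * k.+1%:R ^+ 2 * (k.+1%:R ^+ 2 - 1) / 3.
  by rewrite /Pl !mulr2n -[k.+2]addn2 -[k.+1]addn1 !natrD; field.
have hpos : 0 <= dl ^+ 3 * k.+1%:R ^+ 2 * (k.+1%:R ^+ 2 - 1) / 3.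
  have hx : 1 <= k.+1%:R :> R by rewrite ler1n.
  apply: divr_ge0; last by lra.
  apply: mulr_ge0; first by apply: mulr_ge0; apply: exprn_ge0 => //; lra.
  rewrite subr_ge0 expr2; nra.
rewrite hr !mulr2n.
nra.
Qed.

Lemma cheb_neg (y : R) k :
  chebp (- y) k = ((-1) ^+ k * (chebp y k).1, (-1) ^+ k.+1 * (chebp y k).2).
Proof.
elim: k => [|k IH] /=; first by rewrite expr0 expr1 mul1r mulN1r.
rewrite IH /=; congr pair; rewrite !mulr2n !exprS; ring.
Qed.


Lemma msize_subdom n (p q : {mpoly R[n]}) :
  (msize q < msize p)%N -> msize (p - q) = msize p.
Proof.
move=> hlt; apply/anti_leq/andP; split.
  apply: leq_trans (msizeD_le _ _) _; rewrite msizeN geq_max leqnn.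
  exact: ltnW.
have := msizeD_le (p - q) q; rewrite subrK leq_max => /orP [] // h.
by move: (leq_ltn_trans h hlt); rewrite ltnn.
Qed.

Lemma cheb_msize n (L : {mpoly R[n]}) k : msize L = 2%N ->
  msize (chebp L k).1 = k.+1 /\ msize (chebp L k).2 = k.+2.
Proof.
move=> hL; elim: k => [|k [IH1 IH2]] /=; first by rewrite msize1.
split=> //.
have nzL : L != 0 by rewrite -msize_poly_eq0 hL.
have nzb : (chebp L k).2 != 0 by rewrite -msize_poly_eq0 IH2.
have h2 : msize ((L * (chebp L k).2) *+ 2) = k.+3.
  rewrite -scaler_nat msizeZ; last by rewrite pnatr_eq0.
  by rewrite msizeM // hL IH2.
by rewrite msize_subdom h2 // IH1.
Qed.

Lemma cheb_meval n (v : 'I_n -> R) (L : {mpoly R[n]}) k :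
  (chebp L k).1.@[v] = (chebp L.@[v] k).1 /\ (chebp L k).2.@[v] = (chebp L.@[v] k).2.
Proof.
elim: k => [|k [IH1 IH2]] /=; first by rewrite meval1.
by rewrite mevalB mevalMn mevalM IH1 IH2.
Qed.

Lemma sum_bool_ge1 n (f : 'I_n -> bool) i : f i -> 1 <= \sum_j (f j)%:R :> R.
Proof.
move=> fi; rewrite (bigD1 i) //= fi lerDl; apply: sumr_ge0 => j _; exact: ler0n.
Qed.

Lemma sum_bool_compl n (f : 'I_n -> bool) :
  \sum_j (f j)%:R + \sum_j (~~ f j)%:R = n%:R :> R.
Proof.
rewrite -big_split /= (eq_bigr (fun _ => 1)); last by move=> j _; case: (f j); rewrite /= ?addr0 ?add0r.
by rewrite sumr_const card_ord.
Qed.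

End Real.

Theorem theorem9 (R : realType) (n : nat) (c : R) (d : nat) :
  (3 <= n)%N -> 0 < c ->
  1 < 2 * c + 2 / 3 * c ^+ 2 - 2 * c / (3 * (n - 2)%:R) ->
  d%:Z = Num.ceil (Num.sqrt (c * (n - 2)%:R)) ->
  exists q : {mpoly R[n]},
    q != 0 /\ mdegree q = (if odd d then d.+1 else d) /\ approx13 (@NAE n) q.
Proof.
move=> hn hc hyp hceil.
set m : R := (n - 2)%:R.
have hm1 : 1 <= m by rewrite /m ler1n subn_gt0.
have hnm : n%:R = m + 2 by rewrite /m natrB ?subrK // ltnW.
have hdd : c * m <= d%:R ^+ 2.
  have h1 := ceil_ge (Num.sqrt (c * m)).
  rewrite -hceil -pmulrn in h1.
  have hs0 : 0 <= Num.sqrt (c * m) by apply: sqrtr_ge0.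
  have hcm : 0 <= c * m by apply: mulr_ge0; lra.
  rewrite -(sqr_sqrtr hcm); nra.
set D := if odd d then d.+1 else d.
have hDe : ~~ odd D by rewrite /D; case: ifP => h //=; rewrite h.
have hdD : d%:R <= D%:R :> R by rewrite ler_nat /D; case: ifP.
have hDD : c * m <= D%:R ^+ 2 by apply: (le_trans hdd); rewrite ler_sqr ?nnegrE //.
set z : R := 1 + 2 / m.
set A := (chebp z D).1.
have hA : 2 <= A.
  have hdl : 0 <= 2 / m by apply: divr_ge0; lra.
  have := cheb_lower D hdl; rewrite -/z -/A => /andP [h _].
  suff : 2 <= Pl (2 / m) D%:R by lra.
  rewrite /Pl.
  set u := D%:R ^+ 2.
  set im := m^-1.
  have him : 0 < im <= 1 by rewrite invr_gt0 invf_le1; lra.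
  have hmim : m * im = 1 by rewrite mulfV //; lra.
  have hyp' : 1 < 2 * c + 2 / 3 * c ^+ 2 - 2 * c / 3 * im.
    by move: hyp; rewrite invfM -/m /im; rewrite !mulrA.
  have hu : c <= u * im.
    have := ler_wpM2r (_ : 0 <= im) hDD; rewrite -mulrA hmim mulr1; apply; lra.
  rewrite (mulrC 2 im) -/im.
  have -> : 1 + u * (im * 2) + u * (u - 1) * (im * 2) ^+ 2 / 6 =
     1 + 2 * (u * im) + 2 / 3 * ((u * im) ^+ 2 - (u * im) * im) by field.
  nra.
have hm0 : m != 0 by rewrite gt_eqF //; lra.
set L : {mpoly R[n]} := (2 / m) *: \sum_(i < n) 'X_i - (n%:R / m)%:MP.
have hLev : forall v : 'I_n -> R, L.@[v] = 2 / m * \sum_i v i - n%:R / m.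
  move=> v; rewrite /L mevalB mevalZ mevalC raddf_sum /=.
  by congr (_ * _ - _); apply: eq_bigr => i _; rewrite mevalXU.
have hLb : forall x : 'I_n -> bool, L.@[bitpt R x] = 2 / m * \sum_i (x i)%:R - n%:R / m.
  by move=> x; rewrite hLev.
have i0 : 'I_n by exists 0%N; apply: leq_trans hn.
have hS1 : \sum_(i < n) ((fun _ => true) i)%:R = n%:R :> R.
  by rewrite /= sumr_const card_ord.
have hS0 : \sum_(i < n) ((fun _ => false) i)%:R = 0 :> R.
  by rewrite /= big1.
have hLsz : msize L = 2%N.
  apply/anti_leq/andP; split.
    apply: leq_trans (msizeD_le _ _) _; rewrite msizeN geq_max msizeC; apply/andP; split; last by case: (_ != 0).
    apply: leq_trans (msizeZ_le _ _) _.
    apply: leq_trans (msize_sum _ _ _) _.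
    by apply/bigmax_leqP => i _; rewrite msizeX mdeg1.
  rewrite ltnNge; apply/negP => /msize1_polyC hc0.
  have e1 := hLb (fun _ => true); have e0 := hLb (fun _ => false).
  rewrite hS1 in e1; rewrite hS0 in e0.
  rewrite hc0 mevalC in e1; rewrite hc0 mevalC in e0.
  have := etrans (esym e1) e0.
  rewrite hnm; move/eqP; rewrite -subr_eq0; apply/negP.
  have -> : 2 / m * (m + 2) - (m + 2) / m - (2 / m * 0 - (m + 2) / m) = 2 / m * (m + 2) by ring.
  by apply: lt0r_neq0; apply: mulr_gt0; [apply: divr_gt0|]; lra.
have hA0 : A != 0 by rewrite gt_eqF //; lra.
have hk0 : 2 / (3 * A) != 0 by apply: mulf_neq0; [rewrite pnatr_eq0 | rewrite invr_eq0 mulf_neq0 // pnatr_eq0].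
have [hk1 _] := cheb_msize D hLsz.
have hsz : msize ((2 / (3 * A)) *: (chebp L D).1) = D.+1 by rewrite msizeZ.
exists ((2 / (3 * A)) *: (chebp L D).1); split.
  by rewrite -msize_poly_eq0 hsz.
split; first by rewrite /mdegree hsz.
move=> x; rewrite mevalZ (cheb_meval _ _ _).1 hLb.
have hkA : 2 / (3 * A) * A = 2 / 3 by field; rewrite ?hA0 ?andbT ?pnatr_eq0.
rewrite /NAE; case: ifP => hall.
  have hx : forall i, x i = x i0.
    by move=> i; apply/eqP; move/forallP: hall => /(_ i) /forallP /(_ i0).
  have -> : (chebp (2 / m * \sum_i (x i)%:R - n%:R / m) D).1 = A.
    case hxi0: (x i0).
      rewrite (eq_bigr (fun _ => true%:R)) ?hS1; last by move=> i _; rewrite hx hxi0.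
      have -> : 2 / m * n%:R - n%:R / m = z by rewrite hnm /z; field.
      by [].
    rewrite (eq_bigr (fun _ => false%:R)) ?hS0; last by move=> i _; rewrite hx hxi0.
    have -> : 2 / m * 0 - n%:R / m = - z by rewrite hnm /z; field.
    by rewrite cheb_neg /= -signr_odd (negbTE hDe) expr0 mul1r.
  rewrite hkA; have -> : (1%N)%:R - 2 / 3 = 3^-1 :> R by field.
  by rewrite ger0_norm // invr_ge0; lra.
move/negbT: hall; rewrite negb_forall => /existsP [i]; rewrite negb_forall => /existsP [j] hij.
set S := \sum_i (x i)%:R.
have hcm := sum_bool_compl R x; rewrite -/S in hcm.
have [hSlo hShi] : 1 <= S /\ 1 <= \sum_i (~~ x i)%:R :> R.
  case hxi : (x i); case hxj : (x j); rewrite hxi hxj // in hij.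
    by split; [apply: (sum_bool_ge1 _ hxi) | apply: (@sum_bool_ge1 R n (fun k => ~~ x k) j); rewrite hxj].
  by split; [apply: (sum_bool_ge1 _ hxj) | apply: (@sum_bool_ge1 R n (fun k => ~~ x k) i); rewrite hxi].
set y := 2 / m * S - n%:R / m.
have hym : y * m = 2 * S - (m + 2) by rewrite /y hnm; field.
have hy2 : y ^+ 2 <= 1.
  have hSn : S <= m + 1 by lra.
  have h1 : - m <= y * m <= m by apply/andP; split; lra.
  have hy1 : -1 <= y <= 1.
    move/andP: h1 => [h1 h2]; apply/andP; split; nra.
  move/andP: hy1 => [h3 h4]; nra.
have ht := cheb_bound D hy2.
set t := (chebp y D).1 in ht *.
have ht1 : -1 <= t <= 1 by apply/andP; split; nra.
set k := 2 / (3 * A).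
have hk : 0 < k <= 3^-1.
  apply/andP; split; first by rewrite /k divr_gt0 //; lra.
  have hkp : 0 < k by rewrite /k divr_gt0 //; lra.
  have := hkA; rewrite -/k => hkA'.
  nra.
rewrite ler_norml; move/andP: ht1 => [h5 h6]; move/andP: hk => [h7 h8].
apply/andP; split; nra.
Qed.
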